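(* Consider the generalized trimmed lasso problem $$\min_{x_0,\ldots,x_L}\ f(x_0,x_1,\ldots,x_L)+\sum_{l=1}^L\gamma_l T_{K_l,m_l,p_l}(D_lx_l-c_l)$$ with $f:\mathbb{R}^{n_0+\cdots+n_L}\to\mathbb{R}$ directionally differentiable, and let $x^*=(x_0^*,\ldots,x_L^* )$ be a d-stationary point. Fix $l\in[L]$ and suppose: (A1) there is $\overline{x}_l\in\mathbb{R}^{n_l}$ with $D_l\overline{x}_l-c_l=0$; (A2) there is $\Gamma_l>0$ with $\sup_{d_l\in\mathbb{R}^{n_l},\|d_l\|_2=1}f'(x^*;(0,\ldots,0,d_l,0,\ldots,0))\le\Gamma_l$ (where $d_l$ sits in the $l$-th block). If $\gamma_l>\Gamma_l/\sigma_{K_l,m_l,p_l}(D_l)$, then $T_{K_l,m_l,p_l}(D_lx_l^*-c_l)=0$. Moreover, in the case $p_l=1$, $D_l=I$ (so $m_l=n_l$), $c_l=0$, and $f(x_0,\ldots,x_L)=g(x_0,\ldots,x_L)+\sum_{k\in[L]}\eta_k\|x_k\|_1$ with $\eta_k\ge0$ and $g$ real-valued and directionally differentiable, the same conclusion $T_{K_l,n_l,1}(x_l^* )=0$ holds whenever $\gamma_l>\Gamma_l$, where now $\Gamma_l$ is any real number with $$\sup_{d_l\in\{-1,0,1\}^{n_l},\ \|d_l\|_1=1} g'(x^*;(0,\ldots,d_l,\ldots,0))-\eta_l\le\Gamma_l.$$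
   Context: Trimmed $\ell_1$ norm: for $z=(z_1^\top,\ldots,z_m^\top)^\top\in\mathbb{R}^{mp}$, $z_i\in\mathbb{R}^p$, $K\in\{0,\ldots,m-1\}$: $T_{K,m,p}(z)=\min_{\Lambda\subset[m],|\Lambda|=m-K}\sum_{i\in\Lambda}\|z_i\|_2$. Problem data: $n_0\ge0$, $\gamma_l>0$, $K_l\in\{0,\ldots,m_l-1\}$, $c_l\in\mathbb{R}^{m_lp_l}$, $D_l\ne0$ an $m_lp_l\times n_l$ matrix. Directional derivative $h'(x;d)=\lim_{\varsigma\searrow0}(h(x+\varsigma d)-h(x))/\varsigma$; a function is directionally differentiable if this exists in $\mathbb{R}$ everywhere on its domain in feasible directions; $x^*$ is d-stationary if the directional derivative of the whole objective at $x^*$ is $\ge0$ in every direction. For a matrix $A\neq0$, $\sigma_{\min}(A)$ is its smallest nonzero singular value. For $D=((D)_1^\top,\ldots,(D)_m^\top)^\top\ne0$ with blocks $(D)_i\in\mathbb{R}^{p\times n}$ and $\Lambda\subset[m]$, $(D)_\Lambda$ is the submatrix formed by the blocks $(D)_i$, $i\in\Lambda$; define $\sigma_{K,m,p}(D)=\sigma_{\min}(D)$ if $D$ is surjective, and otherwise $\sigma_{K,m,p}(D)=\min\{\sigma_{\min}((D)_\Lambda)\mid \Lambda\subset[m],|\Lambda|=m-K,(D)_\Lambda\ne0\}$. *)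

(* Defs.v *)
From HB Require Import structures.
From mathcomp Require Import all_boot all_order all_algebra.
From mathcomp Require Import all_classical all_reals all_analysis.
Set Implicit Arguments. Unset Strict Implicit. Unset Printing Implicit Defensive.
Import Order.TTheory GRing.Theory Num.Theory.
Import numFieldNormedType.Exports.
Local Open Scope classical_set_scope.
Local Open Scope ring_scope.

(* index of the j-th coordinate of the i-th block (= i*p + j, standard
   row-major order of the product finType, as used by mxvec) *)
Definition blk_idx (m p : nat) (i : 'I_m) (j : 'I_p) : 'I_(m * p) :=
  mxvec_index i j.
Definition unblk (m p : nat) (k : 'I_(m * p)) : 'I_m * 'I_p :=
  enum_val (cast_ord (esym (mxvec_cast m p)) k).

Definition norm2 (R : realType) (k : nat) (v : 'cV[R]_k) : R :=
  Num.sqrt (\sum_(i < k) v i 0 ^+ 2).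
Definition norm1 (R : realType) (k : nat) (v : 'cV[R]_k) : R :=
  \sum_(i < k) `|v i 0|.

Definition block (R : realType) (m p : nat) (z : 'cV[R]_(m * p)) (i : 'I_m)
  : 'cV[R]_p := \col_(j < p) z (blk_idx i j) 0.

Definition trimmed (R : realType) (K m p : nat) (z : 'cV[R]_(m * p)) : R :=
  inf [set t : R | exists Lam : {set 'I_m},
         #|Lam| = (m - K)%N /\ t = \sum_(i in Lam) norm2 (block z i)].

(* (D)_Λ : the submatrix formed by the blocks (D)_i, i in Λ (in increasing order) *)
Definition Dsub (R : realType) (m p n : nat) (D : 'M[R]_(m * p, n))
  (Lam : {set 'I_m}) : 'M[R]_(#|Lam| * p, n) :=
  \matrix_(r < #|Lam| * p, c < n)
     D (blk_idx (enum_val (unblk r).1) (unblk r).2) c.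

(* smallest nonzero singular value: singular values of A are the square roots
   of the eigenvalues (roots of the characteristic polynomial) of A^T A *)
Definition sigma_min (R : realType) (r k : nat) (A : 'M[R]_(r, k)) : R :=
  inf [set s : R | 0 < s /\ root (char_poly (A^T *m A)) (s ^+ 2)].

Definition surjective_mx (R : realType) (r k : nat) (A : 'M[R]_(r, k)) : Prop :=
  forall y : 'cV[R]_r, exists x : 'cV[R]_k, A *m x = y.

Definition sigma_Kmp (R : realType) (K m p n : nat) (D : 'M[R]_(m * p, n)) : R :=
  if `[< surjective_mx D >] then sigma_min D
  else inf [set s : R | exists Lam : {set 'I_m},
          [/\ #|Lam| = (m - K)%N, Dsub D Lam != 0 & s = sigma_min (Dsub D Lam)]].

Definition pvec (R : realType) (N : nat) (n : 'I_N -> nat) :=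
  forall i : 'I_N, 'cV[R]_(n i).

Definition padd (R : realType) N (n : 'I_N -> nat) (x y : pvec R n) : pvec R n :=
  fun i => x i + y i.
Definition pscale (R : realType) N (n : 'I_N -> nat) (s : R) (x : pvec R n)
  : pvec R n := fun i => s *: x i.

Definition embed (R : realType) N (n : 'I_N -> nat) (l : 'I_N) (d : 'cV[R]_(n l))
  : pvec R n :=
  fun i => match l =P i with
           | ReflectT e => castmx (f_equal n e, erefl 1%N) d
           | ReflectF _ => 0
           end.

Definition dquot (R : realType) N (n : 'I_N -> nat) (h : pvec R n -> R)
  (x d : pvec R n) : R -> R :=
  fun s => (h (padd x (pscale s d)) - h x) / s.

Definition has_dderiv (R : realType) N (n : 'I_N -> nat) (h : pvec R n -> R)
  (x d : pvec R n) (v : R) : Prop :=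
  dquot h x d @ 0^'+ --> v.

Definition dderiv (R : realType) N (n : 'I_N -> nat) (h : pvec R n -> R)
  (x d : pvec R n) : R := lim (dquot h x d @ 0^'+).

Definition dir_differentiable (R : realType) N (n : 'I_N -> nat)
  (h : pvec R n -> R) : Prop :=
  forall x d : pvec R n, exists v : R, has_dderiv h x d v.

Definition dstationary (R : realType) N (n : 'I_N -> nat) (h : pvec R n -> R)
  (x : pvec R n) : Prop :=
  forall d : pvec R n, exists v : R, has_dderiv h x d v /\ 0 <= v.

(* objective f(x) + sum_{l in [L]} γ_l T_{K_l,m_l,p_l}(D_l x_l - c_l);
   block l in [L] is block (lift ord0 l) of 'I_L.+1, block 0 is x_0 *)
Definition objective (R : realType) (L : nat) (n : 'I_L.+1 -> nat)
  (m p K : 'I_L -> nat) (gam : 'I_L -> R)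
  (c : forall l : 'I_L, 'cV[R]_(m l * p l))
  (D : forall l : 'I_L, 'M[R]_(m l * p l, n (lift ord0 l)))
  (f : pvec R n -> R) : pvec R n -> R :=
  fun x => f x + \sum_(l < L)
     gam l * trimmed (K l) (D l *m x (lift ord0 l) - c l).

(* Main.v *)
Require Import Defs.
From HB Require Import structures.
From mathcomp Require Import all_boot all_order all_algebra.
From mathcomp Require Import all_classical all_reals all_analysis.
From mathcomp Require Import complex.
From mathcomp Require Import ring lra.
Import Order.TTheory GRing.Theory Num.Theory.
Import numFieldNormedType.Exports.
Local Open Scope ring_scope.
Local Open Scope classical_set_scope.
Set Implicit Arguments. Unset Strict Implicit. Unset Printing Implicit Defensive.

Notation ct A := ((A ^t*)%sesqui).
Notation cplx A := (map_mx (real_complex _) A).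

Lemma ctv_sum {C : numClosedFieldType} k (v : 'cV[C]_k) :
  (ct v *m v) 0 0 = \sum_j `|v j 0| ^+ 2.
Proof.
rewrite mxE; apply: eq_bigr => j _; rewrite !mxE normCK mulrC.
by [].
Qed.

Lemma ct_mul {C : numClosedFieldType} a b c (A : 'M[C]_(a,b)) (B : 'M[C]_(b,c)) :
  ct (A *m B) = ct B *m ct A.
Proof. by rewrite trmx_mul map_mxM. Qed.

Lemma real_ct {R : realType} a b (A : 'M[R]_(a,b)) : ct (cplx A) = cplx A^T.
Proof.
apply/matrixP => i j; rewrite !mxE; exact: conjc_real.
Qed.


Lemma qform_sum {C : numClosedFieldType} r k (B : 'M[C]_(r,k)) (w : 'cV_k) :
  (ct w *m (ct B *m B) *m w) 0 0 = \sum_j `|(B *m w) j 0| ^+ 2.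
Proof. by rewrite mulmxA -ct_mul -mulmxA ctv_sum. Qed.

Lemma reMC {R : realType} a b (N : 'M[R]_(a,b)) (v : 'cV[R[i]]_b) :
  map_mx (@complex.Re R) (cplx N *m v) = N *m map_mx (@complex.Re R) v.
Proof.
apply/matrixP => i j; rewrite !mxE.
rewrite (@big_morph _ _ (@complex.Re R) 0 +%R 0 +%R); last by [].
  by apply: eq_bigr => l _; rewrite !mxE; case: (v l j) => c e /=; rewrite mul0r subr0.
by move=> [x1 x2] [y1 y2].
Qed.

Lemma trw_sum {R : realType} a (w : 'cV[R]_a) : (w^T *m w) 0 0 = \sum_i w i 0 ^+ 2.
Proof. by rewrite mxE; apply: eq_bigr => i _; rewrite mxE expr2. Qed.

Lemma LA {R : realType} (r k : nat) (A : 'M[R]_(r,k)) (y : 'cV[R]_k) : A != 0 ->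
  0 < sigma_min A /\
  exists d, A *m d = A *m y /\ sigma_min A * norm2 d <= norm2 (A *m y).
Proof.
move=> A0.
pose M := A^T *m A.
pose MC := cplx M.
have MCE0 : MC = ct (cplx A) *m cplx A by rewrite real_ct -map_mxM.
have MCsym : ct MC = MC by rewrite MCE0 ct_mul trmxCK.
have MCn : MC \is normalmx by rewrite qualifE MCsym.
pose P := spectralmx MC. pose X := spectral_diag MC.
have Pu : P \is unitarymx := spectral_unitarymx MC.
have PPt : P *m ct P = 1%:M by apply/unitarymxP.
have PtP : ct P *m P = 1%:M by rewrite -invmx_unitary // mulVmx // spectral_unit.
have MCE : MC = ct P *m diag_mx X *m P by rewrite -invmx_unitary //; apply/orthomx_spectralP.
have Xge0 : forall i, 0 <= X 0 i.
  move=> i.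
  have : diag_mx X = P *m MC *m ct P by rewrite MCE !mulmxA PPt mul1mx -mulmxA PPt mulmx1.
  move/matrixP/(_ i i); rewrite mxE eqxx mulr1n => ->.
  have -> : (P *m MC *m ct P) i i = (ct (ct (row i P)) *m MC *m ct (row i P)) 0 0.
    rewrite trmxCK -row_mul.
    by rewrite !mxE; apply: eq_bigr => j _; rewrite !mxE.
  rewrite MCE0 qform_sum; apply: sumr_ge0 => j _; exact: exprn_ge0.
pose t i := complex.Re (X 0 i).
have Xt : forall i, X 0 i = (t i)%:C%C.
  move=> i; have := Xge0 i; rewrite lecE /t; case: (X 0 i) => a b /= /andP[/eqP -> _].
  by [].
have tge0 : forall i, 0 <= t i by move=> i; rewrite -lecR -Xt.
have rootE : forall x : R, root (char_poly M) x = eigenvalue MC (x%:C%C).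
  by move=> x; rewrite -(fmorph_root (real_complex R)) map_char_poly eigenvalue_root_char.
have PtD : ct P *m diag_mx X = MC *m ct P by rewrite MCE -!mulmxA PPt mulmx1.
have eig1 : forall a, eigenvalue MC a -> exists i, X 0 i = a.
  move=> a /eigenvalueP [v vMC v0].
  pose w := v *m ct P.
  have w0 : w != 0.
    apply: contraNneq v0 => w0; by rewrite -[v]mulmx1 -PtP mulmxA -/w w0 mul0mx.
  have wX : w *m diag_mx X = a *: w.
    by rewrite /w -mulmxA PtD mulmxA vMC scalemxAl.
  clearbody w; rewrite mul_mx_diag in wX.
  have [i wi] : exists i, w 0 i != 0.
    apply/existsP; apply: contraNT w0 => /existsPn H; apply/eqP/rowP => i.
    by move: (H i); rewrite negbK => /eqP ->; rewrite mxE.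
  exists i; move/rowP: wX => /(_ i); rewrite !mxE => /eqP.
  by rewrite mulrC -subr_eq0 -mulrBl mulf_eq0 (negbTE wi) orbF subr_eq0 => /eqP.
have eig2 : forall i, eigenvalue MC (X 0 i).
  move=> i; apply/eigenvalueP; exists (delta_mx 0 i *m P).
    rewrite MCE !mulmxA -(mulmxA _ P) PPt mulmx1 scalemxAl; congr (_ *m _).
    apply/rowP => j; rewrite mul_mx_diag !mxE eqxx /=.
    by case: eqVneq => [->|_]; rewrite ?mulr1 ?mul1r ?mulr0 ?mul0r.
  apply/eqP => /(congr1 (mulmx^~ (ct P))); rewrite mul0mx.
  rewrite -mulmxA PPt mulmx1 => /matrixP /(_ 0 i); rewrite !mxE !eqxx /= => /eqP.
  by rewrite oner_eq0.
have Sdesc : forall s : R, (0 < s /\ root (char_poly (A^T *m A)) (s ^+ 2)) <->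
    (0 < s /\ exists i, t i = s ^+ 2).
  move=> s; split => -[s0 H]; split => //.
    move: H; rewrite -/M rootE => /eig1 [j]; rewrite Xt => /complexI tj.
    by exists j.
  case: H => i ti; rewrite -/M rootE -ti -Xt; exact: eig2.
have [ip tip] : exists i, 0 < t i.
  apply/existsP; apply: contraNT A0 => /existsPn H.
  have X0 : X = 0.
    apply/rowP => i; rewrite Xt mxE.
    have : t i = 0 by apply/eqP; rewrite eq_le tge0 andbT leNgt; exact: H.
    by move=> ->.
  have MC0 : MC = 0 by rewrite MCE X0 (_ : diag_mx 0 = 0) ?mulmx0 ?mul0mx //; apply/matrixP => a b; rewrite !mxE mul0rn.
  have M0 : M = 0 by apply: (@map_mx_inj _ _ (real_complex R)); rewrite map_mx0.
  apply/eqP/matrixP => a b; rewrite mxE.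
  have /eqP : M b b = 0 by rewrite M0 mxE.
  rewrite mxE psumr_eq0; last by move=> j _; rewrite mxE -expr2 sqr_ge0.
  move/allP => /(_ a (mem_index_enum _)); rewrite mxE -expr2 sqrf_eq0 => /eqP.
  by [].
case: (@arg_minP _ _ _ ip (fun i => 0 < t i) t tip) => i0 ti0 Hmin.
pose smin := Num.sqrt (t i0).
have smin0 : 0 < smin by rewrite sqrtr_gt0.
have Ssmin : (0 < smin /\ root (char_poly (A^T *m A)) (smin ^+ 2)).
  by apply/Sdesc; split => //; exists i0; rewrite sqr_sqrtr // ltW.
have Slb : forall s, (0 < s /\ root (char_poly (A^T *m A)) (s ^+ 2)) -> smin <= s.
  move=> s /Sdesc [s0 [j tj]].
  have tj0 : 0 < t j by rewrite tj exprn_gt0.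
  rewrite /smin -(ger0_norm (ltW s0)) -sqrtr_sqr -tj ler_sqrt ?(ltW tj0) //.
  exact: Hmin.
have sigE : sigma_min A = smin.
  rewrite /sigma_min; apply/eqP; rewrite eq_le; apply/andP; split.
    apply: ge_inf => //; exists 0 => s [s0 _]; exact: ltW.
  by apply: lb_le_inf; [exists smin | move=> s /Slb].
rewrite sigE; split => //.
pose yC := cplx y.
pose u := P *m yC.
pose u' := \col_j (if 0 < t j then u j 0 else 0).
pose dC := ct P *m u'.
pose d := map_mx (@complex.Re R) dC.
have Du : diag_mx X *m u' = diag_mx X *m u.
  apply/colP => j; rewrite !mul_diag_mx !mxE.
  case: ifP => // /negbT; rewrite lt_def tge0 andbT negbK => /eqP tj.
  by rewrite Xt tj mulr0 mul0r.
have C1 : MC *m dC = MC *m yC.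
  by rewrite /dC MCE -!mulmxA (mulmxA P) PPt mul1mx Du.
have C2 : M *m d = M *m y.
  have := congr1 (map_mx (@complex.Re R)) C1; rewrite !reMC => ->.
  by congr (_ *m _); apply/matrixP => a b; rewrite !mxE.
have C3 : A *m d = A *m y.
  have Me : M *m (d - y) = 0 by rewrite mulmxBr C2 subrr.
  apply/eqP; rewrite -subr_eq0 -mulmxBr; apply/eqP; move: Me.
  move: (d - y) => e Me.
  have : ((A *m e)^T *m (A *m e)) 0 0 = 0 by rewrite trmx_mul -mulmxA (mulmxA A^T) -/M Me mulmx0 mxE.
  rewrite trw_sum => /eqP; rewrite psumr_eq0; last by move=> j _; exact: sqr_ge0.
  move/allP => H; apply/colP => j; rewrite [RHS]mxE; apply/eqP.
  by have := H j (mem_index_enum _); rewrite sqrf_eq0.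
exists d; split => //.
have n2E : forall a (w : 'cV[R]_a), norm2 w ^+ 2 = \sum_i w i 0 ^+ 2.
  by move=> a w; rewrite /norm2 sqr_sqrtr // sumr_ge0 // => i _; exact: sqr_ge0.
have nd : (norm2 d ^+ 2)%:C%C <= (ct dC *m dC) 0 0.
  rewrite n2E ctv_sum rmorph_sum; apply: ler_sum => j _.
  rewrite mxE -add_Re2_Im2 lecR lerDl; exact: sqr_ge0.
have ndC : ct dC *m dC = ct u' *m u'.
  by rewrite /dC ct_mul trmxCK mulmxA -(mulmxA _ P) PPt mulmx1.
have nu' : (ct u' *m u') 0 0 = \sum_j (if 0 < t j then `|u j 0| ^+ 2 else 0).
  by rewrite ctv_sum; apply: eq_bigr => j _; rewrite mxE; case: ifP; rewrite ?normr0 ?expr0n.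
have nAy : (norm2 (A *m y) ^+ 2)%:C%C = \sum_j `|u j 0| ^+ 2 * X 0 j.
  rewrite n2E -trw_sum trmx_mul -mulmxA (mulmxA A^T) -/M.
  have -> : ((y^T *m (M *m y)) 0 0)%:C%C = (ct yC *m MC *m yC) 0 0.
    by rewrite /yC /MC real_ct -!map_mxM [in RHS]mxE mulmxA.
  rewrite MCE !mulmxA -(ct_mul P yC) -/u -mulmxA mul_mx_diag mxE.
  apply: eq_bigr => j _; rewrite !mxE normCK; ring.
have key : ((smin * norm2 d) ^+ 2)%:C%C <= (norm2 (A *m y) ^+ 2)%:C%C.
  rewrite exprMn rmorphM /=; apply: (le_trans (ler_wpM2l _ nd)).
    by rewrite lecR exprn_ge0 // ltW.
  rewrite ndC nu' nAy mulr_sumr; apply: ler_sum => j _.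
  case: ifP => tj.
    rewrite mulrC ler_wpM2l ?exprn_ge0 // Xt lecR /smin sqr_sqrtr ?(ltW ti0) //.
    exact: Hmin.
  by rewrite mulr0 mulr_ge0 ?exprn_ge0.
move: key; rewrite lecR ler_sqr // nnegrE ?mulr_ge0 ?(ltW smin0) // /norm2 sqrtr_ge0 // /norm2 sqrtr_ge0.
Qed.


Lemma fin_min {R : realType} (T : finType) (P : T -> Prop) (F : T -> R) (S : set R) :
  (forall t, S t <-> exists x, P x /\ t = F x) -> (exists x, P x) ->
  exists x0, [/\ P x0, inf S = F x0 & forall x, P x -> F x0 <= F x].
Proof.
move=> HS [x1 Px1].
have Pb : (fun x => `[< P x >]) x1 by apply/asboolP.
case: (@arg_minP _ _ T x1 (fun x => `[< P x >]) F Pb) => x0 /asboolP Px0 Hmin.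
have Hmin' : forall x, P x -> F x0 <= F x by move=> x Px; apply: Hmin; exact/asboolP.
exists x0; split => //.
have Sx0 : S (F x0) by apply/HS; exists x0.
have lb : lbound S (F x0) by move=> t /HS [x [Px ->]]; exact: Hmin'.
apply/eqP; rewrite eq_le; apply/andP; split.
  by have := ge_inf (ex_intro _ (F x0) lb); apply.
by apply: lb_le_inf => //; exists (F x0).
Qed.

Lemma exists_card (m j : nat) : (j <= m)%N -> exists Lam : {set 'I_m}, #|Lam| = j.
Proof.
move=> jm; exists [set x in take j (enum 'I_m)].
rewrite cardsE; move/card_uniqP: (take_uniq j (enum_uniq 'I_m)) => ->.
by rewrite size_take size_enum_ord; case: ltngtP jm.
Qed.

Lemma norm2_ge0 {R : realType} k (v : 'cV[R]_k) : 0 <= norm2 v.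
Proof. exact: sqrtr_ge0. Qed.

Lemma norm2Z {R : realType} k (a : R) (v : 'cV[R]_k) : norm2 (a *: v) = `|a| * norm2 v.
Proof.
rewrite /norm2 -sqrtr_sqr -sqrtrM ?sqr_ge0 // mulr_sumr; congr Num.sqrt.
by apply: eq_bigr => i _; rewrite mxE exprMn.
Qed.

Lemma trimmed_opt {R : realType} (K m p : nat) (z : 'cV[R]_(m * p)) : (K <= m)%N ->
  exists Lam : {set 'I_m}, [/\ #|Lam| = (m - K)%N,
    trimmed K z = \sum_(i in Lam) norm2 (block z i) &
    forall Lam' : {set 'I_m}, #|Lam'| = (m - K)%N ->
      trimmed K z <= \sum_(i in Lam') norm2 (block z i)].
Proof.
move=> Km.
have [Lam [H1 H2 H3]] := @fin_min R _ (fun Lam : {set 'I_m} => #|Lam| = (m - K)%N)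
  (fun Lam => \sum_(i in Lam) norm2 (block z i))
  [set t : R | exists Lam : {set 'I_m},
         #|Lam| = (m - K)%N /\ t = \sum_(i in Lam) norm2 (block z i)]
  (fun t => iff_refl _) (exists_card (leq_subr K m)).
by exists Lam; split => //; rewrite /trimmed H2.
Qed.

Lemma trimmed_ge0 {R : realType} (K m p : nat) (z : 'cV[R]_(m * p)) : (K <= m)%N ->
  0 <= trimmed K z.
Proof.
move=> Km; have [Lam [_ -> _]] := trimmed_opt z Km.
by apply: sumr_ge0 => i _; exact: norm2_ge0.
Qed.


Lemma unblk_blk m p (i : 'I_m) (j : 'I_p) : unblk (blk_idx i j) = (i, j).
Proof. by rewrite /unblk /blk_idx /mxvec_index cast_ordK enum_rankK. Qed.

Lemma blk_unblk m p (k : 'I_(m * p)) : blk_idx (unblk k).1 (unblk k).2 = k.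
Proof. by rewrite /unblk /blk_idx /mxvec_index -surjective_pairing enum_valK cast_ordKV. Qed.

Lemma blk_inj m p (i i' : 'I_m) (j j' : 'I_p) : blk_idx i j = blk_idx i' j' -> i = i' /\ j = j'.
Proof. by move/(congr1 (@unblk m p)); rewrite !unblk_blk => -[-> ->]. Qed.

Lemma sum_unblk {R : realType} a p (G : 'I_a * 'I_p -> R) :
  \sum_(r < a * p) G (unblk r) = \sum_i \sum_j G (i, j).
Proof.
rewrite pair_bigA /=.
rewrite (reindex (@unblk a p)) /=; last first.
  by exists (fun q => blk_idx q.1 q.2) => [k _|q _]; rewrite ?blk_unblk // unblk_blk -surjective_pairing.
by apply: eq_bigr => r _; rewrite -surjective_pairing.
Qed.

Lemma sum_blk {R : realType} m p (v : 'cV[R]_(m * p)) (F : R -> R) :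
  \sum_(k < m * p) F (v k 0) = \sum_i \sum_j F (v (blk_idx i j) 0).
Proof.
rewrite -(sum_unblk (fun q => F (v (blk_idx q.1 q.2) 0))).
by apply: eq_bigr => k _; rewrite blk_unblk.
Qed.

Lemma norm2_sq {R : realType} k (v : 'cV[R]_k) : norm2 v ^+ 2 = \sum_i v i 0 ^+ 2.
Proof. by rewrite /norm2 sqr_sqrtr // sumr_ge0 // => i _; exact: sqr_ge0. Qed.

Lemma norm2_eq0 {R : realType} k (v : 'cV[R]_k) : norm2 v = 0 -> v = 0.
Proof.
move=> /(congr1 (fun x => x ^+ 2)); rewrite norm2_sq expr0n /= => /eqP.
rewrite psumr_eq0; last by move=> i _; exact: sqr_ge0.
move/allP => H; apply/colP => i; rewrite [RHS]mxE; apply/eqP.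
by have := H i (mem_index_enum _); rewrite sqrf_eq0.
Qed.

Lemma Dsub_mul {R : realType} m p n (D : 'M[R]_(m * p, n)) (Lam : {set 'I_m}) (y : 'cV_n) r :
  (Dsub D Lam *m y) r 0 = (D *m y) (blk_idx (enum_val (unblk r).1) (unblk r).2) 0.
Proof. by rewrite !mxE; apply: eq_bigr => c _; rewrite mxE. Qed.

Lemma Dsub_sq {R : realType} m p n (D : 'M[R]_(m * p, n)) (Lam : {set 'I_m}) (y : 'cV_n) :
  norm2 (Dsub D Lam *m y) ^+ 2 = \sum_(i in Lam) norm2 (block (D *m y) i) ^+ 2.
Proof.
rewrite norm2_sq.
pose G := fun q : 'I_#|Lam| * 'I_p => (D *m y) (blk_idx (enum_val q.1) q.2) 0 ^+ 2.
transitivity (\sum_(r < #|Lam| * p) G (unblk r)); first by apply: eq_bigr => r _; rewrite Dsub_mul.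
rewrite sum_unblk (big_enum_val (fun i => norm2 (block (D *m y) i) ^+ 2)) /=.
by apply: eq_bigr => i _; rewrite norm2_sq; apply: eq_bigr => j _; rewrite mxE.
Qed.

Lemma sqrt_sum_le {R : realType} (I : finType) (A : {pred I}) (a : I -> R) :
  (forall i, 0 <= a i) -> Num.sqrt (\sum_(i in A) a i ^+ 2) <= \sum_(i in A) a i.
Proof.
move=> a0; have S0 : 0 <= \sum_(i in A) a i by apply: sumr_ge0.
rewrite -(ger0_norm S0) -sqrtr_sqr ler_sqrt ?sqr_ge0 //.
rewrite expr2 mulr_sumr; apply: ler_sum => i iA.
rewrite expr2 mulrC ler_wpM2r //.
by rewrite (bigD1 i) //= lerDl sumr_ge0.
Qed.


Lemma blockB {R : realType} m p (u v : 'cV[R]_(m * p)) i : block (u - v) i = block u i - block v i.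
Proof. by apply/colP => j; rewrite !mxE. Qed.
Lemma blockN {R : realType} m p (u : 'cV[R]_(m * p)) i : block (- u) i = - block u i.
Proof. by apply/colP => j; rewrite !mxE. Qed.
Lemma blockD {R : realType} m p (u v : 'cV[R]_(m * p)) i : block (u + v) i = block u i + block v i.
Proof. by apply/colP => j; rewrite !mxE. Qed.
Lemma blockZ {R : realType} m p (a : R) (u : 'cV[R]_(m * p)) i : block (a *: u) i = a *: block u i.
Proof. by apply/colP => j; rewrite !mxE. Qed.

Lemma norm2N {R : realType} k (v : 'cV[R]_k) : norm2 (- v) = norm2 v.
Proof. by rewrite -scaleN1r norm2Z normrN1 mul1r. Qed.

Lemma norm20 {R : realType} k : norm2 (0 : 'cV[R]_k) = 0.
Proof. by rewrite -(scale0r (0 : 'cV[R]_k)) norm2Z normr0 mul0r. Qed.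

Lemma sum_sq_eq0 {R : realType} (I : finType) (A : {pred I}) (a : I -> R) :
  \sum_(i in A) a i ^+ 2 = 0 -> forall i, i \in A -> a i = 0.
Proof.
move=> /eqP; rewrite psumr_eq0; last by move=> i _; exact: sqr_ge0.
move/allP => H i iA; have := H i (mem_index_enum _); rewrite iA /= sqrf_eq0.
by move/eqP.
Qed.

Lemma exists_card_mem (m j : nat) (i : 'I_m) : (0 < j <= m)%N ->
  exists Lam : {set 'I_m}, #|Lam| = j /\ i \in Lam.
Proof.
move=> /andP[j0 jm]; have [L0 HL0] := exists_card jm.
case: (boolP (i \in L0)) => iL; first by exists L0.
have [i0 i0L] : exists i0, i0 \in L0.
  by apply/card_gt0P; rewrite HL0.
exists (i |: (L0 :\ i0)); split; last by rewrite setU11.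
rewrite cardsU1 in_setD1 (negbTE iL) andbF /= (cardsD1 i0 L0) i0L in HL0 *.
by rewrite add1n -HL0.
Qed.

Lemma dir_exists {R : realType} (m p n K : nat) (D : 'M[R]_(m * p, n))
  (c : 'cV[R]_(m * p)) (x xb : 'cV[R]_n) (Lam : {set 'I_m}) :
  (K < m)%N -> D != 0 -> D *m xb - c = 0 -> #|Lam| = (m - K)%N ->
  exists d : 'cV[R]_n,
    [/\ (forall i, i \in Lam -> block (D *m d) i = - block (D *m x - c) i),
     0 < sigma_Kmp K D &
     sigma_Kmp K D * norm2 d <= \sum_(i in Lam) norm2 (block (D *m x - c) i)].
Proof.
move=> Km D0 Hxb HL.
have cE : c = D *m xb by apply/esym/eqP; rewrite -subr_eq0 Hxb.
have zE : D *m x - c = D *m (x - xb) by rewrite mulmxBr cE.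
rewrite zE; move: (x - xb) => v; clear x zE.
have T0 : 0 <= \sum_(i in Lam) norm2 (block (D *m v) i) by apply: sumr_ge0 => i _; exact: norm2_ge0.
case: (pselect (surjective_mx D)) => Hs.
  have sigE : sigma_Kmp K D = sigma_min D by rewrite /sigma_Kmp asboolT.
  pose w := \col_k (if (unblk k).1 \in Lam then - (D *m v) k 0 else 0).
  have [y Hy] := Hs w.
  have [sp [d [Hd1 Hd2]]] := LA y D0.
  exists d; rewrite sigE; split => //.
    by move=> i iL; rewrite Hd1 Hy; apply/colP => j; rewrite !mxE unblk_blk /= iL.
  apply: (le_trans Hd2); rewrite Hy.
  have W2 : norm2 w ^+ 2 = \sum_(i in Lam) norm2 (block (D *m v) i) ^+ 2.
    rewrite norm2_sq (sum_blk w (fun a => a ^+ 2)) [RHS]big_mkcond /=.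
    apply: eq_bigr => i _; case: ifP => iL; last first.
      by apply: big1 => j _; rewrite mxE unblk_blk /= iL expr0n.
    by rewrite norm2_sq; apply: eq_bigr => j _; rewrite !mxE unblk_blk /= iL sqrrN.
  rewrite -(ger0_norm (norm2_ge0 w)) -sqrtr_sqr W2.
  by apply: sqrt_sum_le => i; exact: norm2_ge0.
rewrite /sigma_Kmp asboolF //.
pose S := [set s : R | exists Lam : {set 'I_m},
          [/\ #|Lam| = (m - K)%N, Dsub D Lam != 0 & s = sigma_min (Dsub D Lam)]]%classic.
rewrite -/S.
have Hne : exists L : {set 'I_m}, #|L| = (m - K)%N /\ Dsub D L != 0.
  have /existsP [k /existsP [c0 Dk]] : [exists k, [exists c0, D k c0 != 0]].
    apply: contraNT D0 => /existsPn H; apply/eqP/matrixP => a b.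
    by move: (H a) => /existsPn /(_ b); rewrite negbK => /eqP ->; rewrite mxE.
  have mk : (0 < m - K <= m)%N by rewrite subn_gt0 Km leq_subr.
  have [L [HL1 iL]] := @exists_card_mem m (m - K) (unblk k).1 mk.
  exists L; split => //; apply/eqP => /matrixP /(_ (blk_idx (enum_rank_in iL (unblk k).1) (unblk k).2) c0).
  rewrite !mxE unblk_blk /= enum_rankK_in // blk_unblk => /eqP.
  by rewrite (negbTE Dk).
have [L0 [[HL0 HL0'] HS HSmin]] := @fin_min R _
  (fun L : {set 'I_m} => #|L| = (m - K)%N /\ Dsub D L != 0)
  (fun L => sigma_min (Dsub D L)) S
  (fun t => conj (fun '(ex_intro L (And3 a b e)) => ex_intro _ L (conj (conj a b) e))
                 (fun '(ex_intro L (conj (conj a b) e)) => ex_intro _ L (And3 a b e))) Hne.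
have Spos : 0 < inf S by rewrite HS; have [] := LA 0 HL0'.
case: (eqVneq (Dsub D Lam) 0) => HD.
  exists 0; split => //; last by rewrite norm20 mulr0.
  move=> i iL; rewrite mulmx0.
  have : \sum_(i in Lam) norm2 (block (D *m v) i) ^+ 2 = 0 by rewrite -Dsub_sq HD mul0mx norm20 expr0n.
  move/sum_sq_eq0 => /(_ i iL) /norm2_eq0 ->; apply/colP => j; rewrite !mxE oppr0.
  by [].
have [sp [d [Hd1 Hd2]]] := LA (- v) HD.
exists d; split => //.
  move=> i iL.
  have : \sum_(i in Lam) norm2 (block (D *m (d - - v)) i) ^+ 2 = 0.
    by rewrite -Dsub_sq mulmxBr Hd1 subrr norm20 expr0n.
  move/sum_sq_eq0 => /(_ i iL) /norm2_eq0 /eqP.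
  by rewrite mulmxBr blockB subr_eq0 mulmxN blockN => /eqP.
have le1 : inf S <= sigma_min (Dsub D Lam) by rewrite HS; exact: HSmin (conj HL HD).
apply: le_trans (ler_wpM2r (norm2_ge0 d) le1) _.
apply: (le_trans Hd2).
rewrite -(ger0_norm (norm2_ge0 _)) -sqrtr_sqr Dsub_sq.
rewrite (eq_bigr (fun i => norm2 (block (D *m v) i) ^+ 2)); last by move=> i _; rewrite mulmxN blockN norm2N.
by apply: sqrt_sum_le => i; exact: norm2_ge0.
Qed.


Lemma lim_at0 {R : realType} (f : R -> R) (l : R) : f @ 0^'+ --> l -> lim (f @ 0^'+) = l.
Proof. move=> H; exact: (@cvg_lim _ (@norm_hausdorff _ _) _ _ (at_right_proper_filter 0) _ _ H). Qed.

Lemma dstat_le {R : realType} N (n : 'I_N -> nat) (F g : pvec R n -> R) (xs e : pvec R n) (c0 : R) :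
  dstationary F xs -> (exists v, has_dderiv g xs e v) ->
  (\forall s \near 0^'+, dquot F xs e s <= dquot g xs e s + c0) ->
  0 <= dderiv g xs e + c0.
Proof.
move=> /(_ e) [v [Fv v0]] [vg gv] Hle; rewrite /has_dderiv in Fv gv.
have gE : dderiv g xs e = vg by rewrite /dderiv (lim_at0 gv).
have gc : (fun s => dquot g xs e s + c0) @ 0^'+ --> vg + c0.
  by apply: cvgD => //; exact: cvg_cst.
rewrite gE; apply: (le_trans v0).
exact: (@ler_cvg_to _ _ (at_right_proper_filter 0) R _ _ _ _ Fv gc Hle).
Qed.

Lemma embed_self {R : realType} N (n : 'I_N -> nat) (l : 'I_N) (d : 'cV[R]_(n l)) :
  embed d l = d.
Proof. by rewrite /embed; case: eqP => // e; exact: castmx_id. Qed.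

Lemma embed_other {R : realType} N (n : 'I_N -> nat) (l i : 'I_N) (d : 'cV[R]_(n l)) :
  i != l -> embed d i = 0.
Proof. by move=> H; rewrite /embed; case: eqP => // e; rewrite e eqxx in H. Qed.

Lemma shift_other {R : realType} L (n : 'I_L.+1 -> nat) (xs : pvec R n) (l k : 'I_L)
  (d : 'cV[R]_(n (lift ord0 l))) s :
  k != l -> padd xs (pscale s (embed d)) (lift ord0 k) = xs (lift ord0 k).
Proof.
move=> kl; rewrite /padd /pscale embed_other ?scaler0 ?addr0 //.
Qed.

Lemma shift_self {R : realType} L (n : 'I_L.+1 -> nat) (xs : pvec R n) (l : 'I_L)
  (d : 'cV[R]_(n (lift ord0 l))) s :
  padd xs (pscale s (embed d)) (lift ord0 l) = xs (lift ord0 l) + s *: d.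
Proof. by rewrite /padd /pscale embed_self. Qed.

Lemma sum_split {R : realType} L (G G' : 'I_L -> R) (l : 'I_L) :
  (forall k, k != l -> G' k = G k) ->
  \sum_k G' k - \sum_k G k = G' l - G l.
Proof.
move=> H; rewrite (bigD1 l) //= [X in _ - X](bigD1 l) //=.
rewrite (eq_bigr G) => [|k kl]; last exact: H.
by rewrite opprD addrACA subrr addr0.
Qed.


Lemma blockE {R : realType} m p (v : 'cV[R]_(m * p)) i j : block v i j 0 = v (blk_idx i j) 0.
Proof. by rewrite mxE. Qed.

Lemma norm2_1 {R : realType} (v : 'cV[R]_1) : norm2 v = `|v 0 0|.
Proof. by rewrite /norm2 big_ord1 sqrtr_sqr. Qed.

Lemma spec_dir {R : realType} (m p n : nat) (D : 'M[R]_(m * p, n)) (x : 'cV[R]_n) (i : 'I_m) :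
  p = 1%N -> m = n -> (forall a b, D a b = (nat_of_ord a == nat_of_ord b)%:R) ->
  block (D *m x) i != 0 ->
  exists (d : 'cV[R]_n) (a : R), [/\ 0 < a,
    ((forall k, d k 0 \in [:: -1; 0; 1]) /\ norm1 d = 1),
    (forall s, 0 < s -> s <= a -> norm1 (x + s *: d) = norm1 x - s),
    (forall s, 0 < s -> s <= a ->
       norm2 (block (D *m (x + s *: d)) i) = norm2 (block (D *m x) i) - s) &
    (forall s i', i' != i -> block (D *m (x + s *: d)) i' = block (D *m x) i')].
Proof.
move=> hp hm HD bz; subst p.
have E : (m * 1 = n)%N by rewrite muln1.
have Dv : forall (v : 'cV[R]_n) (k : 'I_(m * 1)), (D *m v) k 0 = v (cast_ord E k) 0.
  move=> v k; rewrite mxE (bigD1 (cast_ord E k)) //= HD /= eqxx mul1r big1 ?addr0 //.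
  move=> k'' /negbTE H; rewrite HD.
  have -> : (nat_of_ord k == nat_of_ord k'') = false.
    by apply/negbTE; apply: contraFN H => /eqP kk; apply/eqP/val_inj.
  by rewrite mul0r.
pose k0 := blk_idx i (ord0 : 'I_1).
pose k0' := cast_ord E k0.
pose zk := x k0' 0.
have bzE : forall v : 'cV[R]_n, norm2 (block (D *m v) i) = `|v k0' 0|.
  by move=> v; rewrite norm2_1 blockE Dv.
have zk0 : zk != 0.
  apply: contra bz => /eqP z0; apply/eqP/colP => j; rewrite (ord1 j) blockE Dv [RHS]mxE.
  exact: z0.
pose sg := Num.sg zk.
pose d := \col_(k < n) (if k == k0' then - sg else 0).
have sg1 : `|sg| = 1 by rewrite normr_sg zk0.
have key : forall s, 0 < s -> s <= `|zk| -> `|zk + s * - sg| = `|zk| - s.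
  move=> s s0 sz; rewrite {1}[zk]numEsg -/sg mulrN mulrC -mulrBl normrM sg1 mulr1.
  by rewrite ger0_norm // subr_ge0.
exists d, `|zk|; split.
- by rewrite normr_gt0.
- split.
  move=> k; rewrite mxE; case: ifP => _; rewrite !inE ?eqxx ?orbT //.
  rewrite /sg; case: sgrP => _; rewrite ?oppr0 ?opprK ?eqxx ?orbT //.
- rewrite /norm1 (bigD1 k0') //= big1 ?addr0; first by rewrite mxE eqxx normrN.
  by move=> k /negbTE kk; rewrite mxE kk normr0.
- move=> s s0 sz; rewrite /norm1 (bigD1 k0') //= [in RHS](bigD1 k0') //=.
  rewrite !mxE eqxx key //.
  rewrite (eq_bigr (fun k => `|x k 0|)); first by rewrite addrAC.
  by move=> k /negbTE kk; rewrite !mxE kk mulr0 addr0.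
- move=> s s0 sz; rewrite !bzE !mxE eqxx key //.
- move=> s i' ii; apply/colP => j; rewrite !blockE !Dv !mxE.
  case: ifP; last by rewrite mulr0 addr0.
  move=> /eqP /cast_ord_inj /blk_inj [ii' _].
  by rewrite ii' eqxx in ii.
Qed.


Lemma obj_diff {R : realType} (L : nat) (n : 'I_L.+1 -> nat)
  (m p K : 'I_L -> nat) (gam : 'I_L -> R)
  (c : forall l : 'I_L, 'cV[R]_(m l * p l))
  (D : forall l : 'I_L, 'M[R]_(m l * p l, n (lift ord0 l)))
  (f : pvec R n -> R) (xs : pvec R n) (l : 'I_L) (d : 'cV[R]_(n (lift ord0 l))) s :
  objective K gam c D f (padd xs (pscale s (embed d))) - objective K gam c D f xs =
  (f (padd xs (pscale s (embed d))) - f xs) +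
  (gam l * trimmed (K l) (D l *m (xs (lift ord0 l) + s *: d) - c l) -
   gam l * trimmed (K l) (D l *m xs (lift ord0 l) - c l)).
Proof.
rewrite /objective opprD addrACA; congr (_ + _).
rewrite (@sum_split R L (fun k => gam k * trimmed (K k) (D k *m xs (lift ord0 k) - c k))
   (fun k => gam k * trimmed (K k) (D k *m padd xs (pscale s (embed d)) (lift ord0 k) - c k)) l).
  by rewrite shift_self.
by move=> k kl; rewrite shift_other.
Qed.

Lemma part1 {R : realType} (L : nat) (n : 'I_L.+1 -> nat)
  (m p K : 'I_L -> nat) (gam : 'I_L -> R)
  (c : forall l : 'I_L, 'cV[R]_(m l * p l))
  (D : forall l : 'I_L, 'M[R]_(m l * p l, n (lift ord0 l))) :
  (forall l, 0 < gam l) ->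
  (forall l, (K l < m l)%N) ->
  (forall l, D l != 0) ->
  (forall (f : pvec R n -> R) (xs : pvec R n) (l : 'I_L) (Gam : R),
     dir_differentiable f ->
     dstationary (@objective R L n m p K gam c D f) xs ->
     (exists xb : 'cV[R]_(n (lift ord0 l)), D l *m xb - c l = 0) ->
     0 < Gam ->
     (forall d : 'cV[R]_(n (lift ord0 l)),
        norm2 d = 1 -> dderiv f xs (embed d) <= Gam) ->
     Gam / sigma_Kmp (K l) (D l) < gam l ->
     trimmed (K l) (D l *m xs (lift ord0 l) - c l) = 0).
Proof.
move=> gam0 Km D0 f xs l Gam fdd dst [xb Hxb] Gam0 Hbound Hgam.
have Kl := ltnW (Km l).
apply/eqP; rewrite eq_le trimmed_ge0 // andbT leNgt; apply/negP => Tpos.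
have [Lam [HL TE Tmin]] := trimmed_opt (D l *m xs (lift ord0 l) - c l) Kl.
have [d [Hd sig0 Hsig]] := dir_exists (xs (lift ord0 l)) (Km l) (D0 l) Hxb HL.
rewrite -TE in Hsig.
move: Tpos Hsig Tmin TE; set T := trimmed _ _ => Tpos Hsig Tmin TE.
have nd0 : 0 < norm2 d.
  rewrite lt_def norm2_ge0 andbT; apply/eqP => /norm2_eq0 d0.
  suff : T = 0 by move=> T0; rewrite T0 ltxx in Tpos.
  rewrite TE big1 // => i iL; rewrite -norm2N -Hd // d0 mulmx0.
  by rewrite (_ : block 0 i = 0) ?norm20 //; apply/colP => j; rewrite !mxE.
pose nd := norm2 d.
pose d1 := nd^-1 *: d.
have ndne0 : nd != 0 by rewrite gt_eqF.
have nd1 : norm2 d1 = 1 by rewrite norm2Z ger0_norm ?invr_ge0 ?norm2_ge0 // mulVf.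
have gl := gam0 l.
have H : \forall s \near 0^'+, dquot (objective K gam c D f) xs (embed d1) s <=
    dquot f xs (embed d1) s + - (gam l * T / nd).
  near=> s.
  have s0 : 0 < s by near: s; exact: nbhs_right_gt.
  have snd : s <= nd by near: s; exact: nbhs_right_le.
  rewrite /dquot obj_diff mulrDl lerD2l ler_pdivrMr //.
  have T'le : trimmed (K l) (D l *m (xs (lift ord0 l) + s *: d1) - c l) <= (1 - s / nd) * T.
    have [_ [_ _ Tmin']] := trimmed_opt (D l *m (xs (lift ord0 l) + s *: d1) - c l) Kl.
    apply: le_trans (Tmin' Lam HL) _.
    rewrite TE mulr_sumr; apply: ler_sum => i iL.
    have -> : D l *m (xs (lift ord0 l) + s *: d1) - c l =
              (D l *m xs (lift ord0 l) - c l) + (s / nd) *: (D l *m d).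
      by rewrite mulmxDr /d1 !scalemxAr scalerA addrAC mulrC.
    rewrite blockD blockZ Hd // scalerN -{1}(scale1r (block _ i)) -scalerBl norm2Z.
    rewrite ger0_norm // subr_ge0 ler_pdivrMr ?mul1r //.
  apply: le_trans (_ : gam l * ((1 - s / nd) * T) - gam l * T <= _).
    by rewrite lerD2r ler_wpM2l // ltW.
  rewrite le_eqVlt; apply/orP; left; apply/eqP; rewrite /nd; ring.
have key := dstat_le dst (fdd xs (embed d1)) H.
have Hb := Hbound d1 nd1.
have k1 : gam l * T / nd <= Gam by move: key; rewrite subr_ge0 => /le_trans; apply.
move: k1; rewrite ler_pdivrMr // => k1.
move: Hgam; rewrite ltr_pdivrMr // => k2.
have k3 : Gam * nd < gam l * sigma_Kmp (K l) (D l) * nd by rewrite ltr_pM2r.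
have k4 : gam l * sigma_Kmp (K l) (D l) * nd <= gam l * T by rewrite -mulrA ler_wpM2l // ltW.
have := le_lt_trans k1 (lt_le_trans k3 k4); by rewrite ltxx.
Unshelve. all: by end_near.
Qed.

Lemma part2 {R : realType} (L : nat) (n : 'I_L.+1 -> nat)
  (m p K : 'I_L -> nat) (gam : 'I_L -> R)
  (c : forall l : 'I_L, 'cV[R]_(m l * p l))
  (D : forall l : 'I_L, 'M[R]_(m l * p l, n (lift ord0 l))) :
  (forall l, 0 < gam l) ->
  (forall l, (K l < m l)%N) ->
  (forall (g f : pvec R n -> R) (eta : 'I_L -> R) (xs : pvec R n) (l : 'I_L)
          (Gam : R),
     (forall k, 0 <= eta k) ->
     dir_differentiable g ->
     f = (fun x => g x + \sum_(k < L) eta k * norm1 (x (lift ord0 k))) ->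
     p l = 1%N ->
     m l = n (lift ord0 l) ->
     (forall i j, D l i j = (nat_of_ord i == nat_of_ord j)%:R) ->
     c l = 0 ->
     dstationary (@objective R L n m p K gam c D f) xs ->
     (forall d : 'cV[R]_(n (lift ord0 l)),
        (forall i, d i 0 \in [:: -1; 0; 1]) -> norm1 d = 1 ->
        dderiv g xs (embed d) - eta l <= Gam) ->
     Gam < gam l ->
     trimmed (K l) (D l *m xs (lift ord0 l) - c l) = 0).
Proof.
move=> gam0 Km g f eta xs l Gam eta0 gdd fE pl ml Dl cl dst Hbound Hgam.
have Kl := ltnW (Km l).
apply/eqP; rewrite eq_le trimmed_ge0 // andbT leNgt; apply/negP => Tpos.
have [Lam [HL TE Tmin]] := trimmed_opt (D l *m xs (lift ord0 l) - c l) Kl.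
move: Tpos Tmin TE; rewrite cl subr0; set T := trimmed _ _ => Tpos Tmin TE.
have /exists_inP [i iL bz] : [exists i in Lam, block (D l *m xs (lift ord0 l)) i != 0].
  apply: contraTT Tpos => /exists_inPn H.
  rewrite TE big1 ?ltxx // => i iL; have := H i iL; rewrite negbK => /eqP ->.
  by rewrite norm20.
have [d [a [a0 [dE d1] Hn1 Hn2 Hoth]]] := spec_dir pl ml Dl bz.
have gl := gam0 l.
have H : \forall s \near 0^'+, dquot (objective K gam c D f) xs (embed d) s <=
    dquot g xs (embed d) s + (- eta l - gam l).
  near=> s.
  have s0 : 0 < s by near: s; exact: nbhs_right_gt.
  have sa : s <= a by near: s; exact: nbhs_right_le.
  rewrite /dquot obj_diff fE /=.
  have -> : forall u v w z : R, (u + v) - (w + z) = (u - w) + (v - z) by move=> *; ring.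
  rewrite (@sum_split R L (fun k => eta k * norm1 (xs (lift ord0 k)))
     (fun k => eta k * norm1 (padd xs (pscale s (embed d)) (lift ord0 k))) l); last first.
    by move=> k kl; rewrite shift_other.
  rewrite shift_self Hn1 // cl subr0.
  have T'le : trimmed (K l) (D l *m (xs (lift ord0 l) + s *: d)) <= T - s.
    have [_ [_ _ Tmin']] := trimmed_opt (D l *m (xs (lift ord0 l) + s *: d)) Kl.
    apply: le_trans (Tmin' Lam HL) _.
    rewrite TE (bigD1 i) //= [in X in _ <= X - _](bigD1 i) //= Hn2 //.
    rewrite (eq_bigr (fun i' => norm2 (block (D l *m xs (lift ord0 l)) i'))).
      by rewrite addrAC.
    by move=> i' /andP [_ ii]; rewrite Hoth.
  rewrite subr0 ler_pdivrMr // mulrDl divfK ?gt_eqF // -addrA lerD2l.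
  have Tt : gam l * trimmed (K l) (D l *m (xs (lift ord0 l) + s *: d)) - gam l * T <= - (gam l * s).
    apply: le_trans (_ : gam l * (T - s) - gam l * T <= _).
      by rewrite lerD2r ler_wpM2l // ltW.
    by rewrite le_eqVlt; apply/orP; left; apply/eqP; ring.
  rewrite -/T; lra.
have key := dstat_le dst (gdd xs (embed d)) H.
have Hb := Hbound d dE d1.
have : gam l <= Gam by move: key; rewrite addrA subr_ge0 => /le_trans; apply.
by rewrite leNgt Hgam.
Unshelve. all: by end_near.
Qed.

Theorem mainTheorem4 (R : realType) (L : nat) (n : 'I_L.+1 -> nat)
  (m p K : 'I_L -> nat) (gam : 'I_L -> R)
  (c : forall l : 'I_L, 'cV[R]_(m l * p l))
  (D : forall l : 'I_L, 'M[R]_(m l * p l, n (lift ord0 l))) :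
  (forall l, 0 < gam l) ->
  (forall l, (K l < m l)%N) ->
  (forall l, D l != 0) ->
  (* general case *)
  (forall (f : pvec R n -> R) (xs : pvec R n) (l : 'I_L) (Gam : R),
     dir_differentiable f ->
     dstationary (@objective R L n m p K gam c D f) xs ->
     (exists xb : 'cV[R]_(n (lift ord0 l)), D l *m xb - c l = 0) ->
     0 < Gam ->
     (forall d : 'cV[R]_(n (lift ord0 l)),
        norm2 d = 1 -> dderiv f xs (embed d) <= Gam) ->
     Gam / sigma_Kmp (K l) (D l) < gam l ->
     trimmed (K l) (D l *m xs (lift ord0 l) - c l) = 0)
  /\
  (* special case p_l = 1, D_l = I, c_l = 0, f = g + sum_k eta_k ||x_k||_1 *)
  (forall (g f : pvec R n -> R) (eta : 'I_L -> R) (xs : pvec R n) (l : 'I_L)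
          (Gam : R),
     (forall k, 0 <= eta k) ->
     dir_differentiable g ->
     f = (fun x => g x + \sum_(k < L) eta k * norm1 (x (lift ord0 k))) ->
     p l = 1%N ->
     m l = n (lift ord0 l) ->
     (forall i j, D l i j = (nat_of_ord i == nat_of_ord j)%:R) ->
     c l = 0 ->
     dstationary (@objective R L n m p K gam c D f) xs ->
     (forall d : 'cV[R]_(n (lift ord0 l)),
        (forall i, d i 0 \in [:: -1; 0; 1]) -> norm1 d = 1 ->
        dderiv g xs (embed d) - eta l <= Gam) ->
     Gam < gam l ->
     trimmed (K l) (D l *m xs (lift ord0 l) - c l) = 0).

Proof.
move=> gam0 Km D0; split.
  exact: part1.
exact: part2.
Qed.
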